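(* In a strategic game in the setting described in the context (with equivalent priors), Assumption SAV precludes Assumption FIX; that is, SAV and FIX cannot both hold.
   Context: Setting: there are $n\ge 2$ players and a measurable space $(\Omega,\mathcal{F})$. Each player $i$ has a prior $p_i$ on $\mathcal{F}$, an action set $A_i\subseteq\mathbb{R}$ with $|A_i|>1$, and a finite private information partition $\mathcal{I}_i$ of $\Omega$ into nonempty measurable events. The priors are equivalent (same null sets); strategies are identified when they agree up to null events. A strategy of player $i$ is a $\sigma(\mathcal{I}_i)$-measurable function $s_i:\Omega\to A_i$, and player $i$ is free to apply any such function. For each strategy $s_i$, player $i$ has a unique conjecture $\Psi_i(s_i)$, an $(n-1)$-tuple of strategies of the other players. Assumption SAV (strategic certainty): for every player $i$ and every strategy $s_i$, $\Psi_i(s_i)=s^i$, where $s^i$ is the true tuple of strategies the other players apply in response to $s_i$ (so each strategy of player $i$ determines exactly one response of each other player, and player $i$'s conjecture is correct). Assumption FIX: for every player $i$, $\Psi_i(s_i')=\Psi_i(s_i'')$ for all strategies $s_i',s_i''$ of player $i$ (the other players keep their strategies when player $i$ changes his). *)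

(* Defs.v *)
From mathcomp Require Import all_boot all_order all_algebra.
From mathcomp Require Import all_classical all_reals all_analysis.
Set Implicit Arguments. Unset Strict Implicit. Unset Printing Implicit Defensive.
Import Order.TTheory GRing.Theory Num.Theory.
Local Open Scope classical_set_scope.
Local Open Scope ring_scope.

Section Game.
Context {d : measure_display} {Omega : measurableType d} {R : realType} {n : nat}.

Definition equivalent_priors (p : 'I_n -> probability Omega R) : Prop :=
  forall i j (E : set Omega), measurable E -> (p i E = 0%E <-> p j E = 0%E).

Definition finite_meas_partition (P : set (set Omega)) : Prop :=
  [/\ finite_set P,
      (forall E, P E -> measurable E /\ E !=set0),
      (forall E F, P E -> P F -> E `&` F !=set0 -> E = F)
    & (forall w, exists2 E, P E & E w)].

Definition gen_measurable (P : set (set Omega)) (f : Omega -> R) : Prop :=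
  forall B : set R, measurable B -> <<s P >> (f @^-1` B).

Definition is_strategy (A : set R) (P : set (set Omega)) (f : Omega -> R) : Prop :=
  (forall w, A (f w)) /\ gen_measurable P f.

(* Strategies are identified when they agree up to a null event
   (null for the priors; they are equivalent, so we require it for all). *)
Definition strat_eq (p : 'I_n -> probability Omega R) (f g : Omega -> R) : Prop :=
  forall k, (p k).-negligible [set w | f w <> g w].

End Game.

(* Main.v *)
Require Import Defs.
From mathcomp Require Import all_boot all_order all_algebra.
From mathcomp Require Import all_classical all_reals all_analysis.
Local Open Scope classical_set_scope.
Local Open Scope ring_scope.


Lemma cst_strat (d : measure_display) (Omega : measurableType d) (R : realType)
  (A : set R) (P : set (set Omega)) (a : R) : A a -> is_strategy A P (fun _ => a).
Proof.
move=> Aa; split => // B _.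
have [h0 hC _] := smallest_sigma_algebra setT P.
rewrite (preimage_cst a B); case: ifP => _ //.
by have := hC _ h0; rewrite setTD setC0.
Qed.

Lemma notnegT (d : measure_display) (Omega : measurableType d) (R : realType)
  (p : probability Omega R) : ~ p.-negligible [set: Omega].
Proof.
case=> B [_ pB sB].
have eB : B = setT by apply/seteqP; split => // x _; exact: sB.
move: pB; rewrite eB probability_setT => /eqP; rewrite onee_eq0 //.
Qed.

Lemma se_trans (d : measure_display) (Omega : measurableType d) (R : realType) n
  (p : 'I_n -> probability Omega R) f g h :
  strat_eq p f g -> strat_eq p g h -> strat_eq p f h.
Proof.
move=> fg gh k; apply: (negligibleS _ (negligibleU (fg k) (gh k))).
move=> w /= fh; case: (pselect (f w = g w)) => e; [right; by rewrite -e | by left].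
Qed.

Lemma se_refl (d : measure_display) (Omega : measurableType d) (R : realType) n
  (p : 'I_n -> probability Omega R) f : strat_eq p f f.
Proof. move=> k; apply: (negligibleS _ (negligible_set0 _)) => w /= h; exact: h. Qed.

Lemma se_sym (d : measure_display) (Omega : measurableType d) (R : realType) n
  (p : 'I_n -> probability Omega R) f g :
  strat_eq p f g -> strat_eq p g f.
Proof.
move=> fg k; apply: (negligibleS _ (fg k)) => w /= h e; exact: h.
Qed.

Arguments se_refl {d Omega R n p f}.
Arguments se_sym {d Omega R n p f g}.
Arguments se_trans {d Omega R n p f g h}.
Arguments notnegT {d Omega R}.

(* P : the set of realizable strategy profiles (what the players actually
   apply).
   Psi i s : player i's conjecture (a profile whose j-th entries, j <> i,
   are the conjectured strategies of the others). *)
Theorem theorem3 (d : measure_display) (Omega : measurableType d)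
  (R : realType) (n : nat) (n_ge2 : (2 <= n)%N)
  (p : 'I_n -> probability Omega R) (A : 'I_n -> set R)
  (I : 'I_n -> set (set Omega))
  (P : set ('I_n -> Omega -> R))
  (Psi : 'I_n -> (Omega -> R) -> 'I_n -> (Omega -> R)) :
  equivalent_priors p ->
  (forall i, exists a b, [/\ A i a, A i b & a <> b]) ->
  (forall i, finite_meas_partition (I i)) ->
  (forall sigma, P sigma -> forall j, is_strategy (A j) (I j) (sigma j)) ->
  (forall i s, is_strategy (A i) (I i) s ->
     exists2 sigma, P sigma & strat_eq p (sigma i) s) ->
  (forall i sigma tau, P sigma -> P tau -> strat_eq p (sigma i) (tau i) ->
     forall j, strat_eq p (sigma j) (tau j)) ->
  (forall i s, is_strategy (A i) (I i) s ->
     forall j, j != i -> is_strategy (A j) (I j) (Psi i s j)) ->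
  ~ ( (* SAV *)
      (forall i s sigma, is_strategy (A i) (I i) s -> P sigma ->
         strat_eq p (sigma i) s ->
         forall j, j != i -> strat_eq p (Psi i s j) (sigma j))
    /\ (* FIX *)
      (forall i s s', is_strategy (A i) (I i) s -> is_strategy (A i) (I i) s' ->
         forall j, j != i -> strat_eq p (Psi i s j) (Psi i s' j)) ).
Proof.
move=> _ hA _ hP hfree _ _ [sav fx].
have lt0 : (0 < n)%N by apply: leq_trans n_ge2.
have lt1 : (1 < n)%N by [].
pose i0 := Ordinal lt0. pose k := Ordinal lt1.
have ki : k != i0 by [].
have [a [b [Aa Ab ab]]] := hA k.
have [sigma Ps sa] := hfree k _ (@cst_strat _ _ _ _ (I k) _ Aa).
have [tau Pt tb] := hfree k _ (@cst_strat _ _ _ _ (I k) _ Ab).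
have ssi := (hP _ Ps i0). have sti := (hP _ Pt i0).
have e1 := sav i0 (sigma i0) sigma ssi Ps se_refl k ki.
have e2 := sav i0 (tau i0) tau sti Pt se_refl k ki.
have e3 := fx i0 (sigma i0) (tau i0) ssi sti k ki.
have hab := se_trans (se_sym sa) (se_trans (se_sym e1) (se_trans e3 (se_trans e2 tb))).
apply: (notnegT (p i0)); apply: (negligibleS _ (hab i0)) => w _ /=; exact: ab.
Qed.
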